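(* Let $m\ge 3$, $H=B(l_1,\ldots,l_m)$ and $G=H^2$. Then $G$ is equitably $k$-choosable for every $k\ge m+3$.
   Context: All graphs are finite and simple. For $m,l_1,\ldots,l_m\in\mathbb{N}$ with $l_1\le\cdots\le l_m$, $B(l_1,\ldots,l_m)$ is the graph with vertex set $\{u\}\cup\{v_{i,j}: i\in[m], j\in[l_i]\}$ in which, for each $i\in[m]$, consecutive vertices in the sequence $u, v_{i,1},\ldots,v_{i,l_i}$ are adjacent (and there are no other edges). For a graph $H$, $H^2$ has vertex set $V(H)$ with two vertices adjacent iff their distance in $H$ is 1 or 2. A $k$-assignment $L$ assigns to each vertex a set of exactly $k$ colors; an equitable $L$-coloring of $G$ is a proper coloring $f$ with $f(v)\in L(v)$ such that no color is used more than $\lceil |V(G)|/k\rceil$ times; $G$ is equitably $k$-choosable if it has an equitable $L$-coloring for every $k$-assignment $L$. *)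

(* Defs.v *)
From mathcomp Require Import all_boot.
Set Implicit Arguments. Unset Strict Implicit. Unset Printing Implicit Defensive.

(* Vertex set of B(l_1,...,l_m): None = u, Some (Tagged i j) = v_{i, j+1}
   (j : 'I_(l i) is 0-based, so it represents index j+1 in [l_i]). *)
Definition spider_vertex (m : nat) (l : 'I_m -> nat) : finType :=
  option {i : 'I_m & 'I_(l i)}.

Definition spider_adj (m : nat) (l : 'I_m -> nat) : rel (spider_vertex l) :=
  fun x y =>
    match x, y with
    | None, None => false
    | None, Some q => nat_of_ord (tagged q) == 0
    | Some p, None => nat_of_ord (tagged p) == 0
    | Some p, Some q =>
        (tag p == tag q) &&
        (((tagged p).+1 == tagged q :> nat) || ((tagged q).+1 == tagged p :> nat))
    end.

Definition graph_sq (T : finType) (e : rel T) : rel T :=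
  fun x y => (x != y) && (e x y || [exists z, e x z && e z y]).

Definition k_assignment (T : finType) (k : nat) (L : T -> seq nat) : Prop :=
  forall v, uniq (L v) /\ size (L v) = k.

Definition ceil_div (n k : nat) : nat := (n + k.-1) %/ k.

Definition equitable_L_coloring (T : finType) (e : rel T) (k : nat)
    (L : T -> seq nat) (f : T -> nat) : Prop :=
  (forall x y, e x y -> f x != f y) /\
  (forall v, f v \in L v) /\
  (forall c : nat, #|[set v | f v == c]| <= ceil_div #|T| k).

Definition equitably_k_choosable (T : finType) (e : rel T) (k : nat) : Prop :=
  forall L : T -> seq nat, k_assignment k L ->
    exists f : T -> nat, equitable_L_coloring e k L f.

(* Main.v *)
Require Import Defs.
From mathcomp Require Import all_boot zify.
Set Implicit Arguments. Unset Strict Implicit. Unset Printing Implicit Defensive.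

Lemma card_le_inj (T : finType) (A : {pred T}) (h : T -> nat) (b : nat) :
  {in A &, injective h} -> (forall x, x \in A -> h x < b) -> #|A| <= b.
Proof.
move=> hinj hb; rewrite cardE -(size_map h) -[b](size_iota 0).
apply: uniq_leq_size.
  rewrite map_inj_in_uniq ?enum_uniq // => x y; rewrite !mem_enum; exact: hinj.
move=> y /mapP [x]; rewrite mem_enum => xA ->; rewrite mem_iota /= add0n; exact: hb.
Qed.

Section Gen.
Variables (T : finType) (code : T -> nat).
Hypothesis code_inj : injective code.

Definition pos x := #|[set y | code y < code x]|.

Lemma pos_lt x : pos x < #|T|.
Proof.
rewrite /pos -cardsT; apply: proper_card; rewrite properT; apply/eqP => H.
have : x \in [set y | code y < code x] by rewrite H inE.
by rewrite inE ltnn.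
Qed.

Lemma pos_mono x y : code x < code y -> pos x < pos y.
Proof.
move=> lt; apply: proper_card; apply/properP; split.
  apply/subsetP => z; rewrite !inE => lz; exact: ltn_trans lz lt.
by exists x; rewrite !inE ?lt ?ltnn.
Qed.

Lemma pos_inj : injective pos.
Proof.
move=> x y E; case: (ltngtP (code x) (code y)) => [l|l|]; last exact: code_inj.
- by have := pos_mono l; rewrite E ltnn.
- by have := pos_mono l; rewrite E ltnn.
Qed.

Lemma pos_code x y : pos x < pos y -> code x < code y.
Proof.
move=> l; case: (ltngtP (code x) (code y)) => // [l2|/code_inj E].
  by have := pos_mono l2; rewrite ltnNge ltnW.
by rewrite E ltnn in l.
Qed.

Lemma pos_span x y : code y < code x -> pos x <= pos y + (code x - code y).
Proof.
move=> lt.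
have sub : [set z | code z < code x] \subset
   [set z | code z < code y] :|: [set z | (code y <= code z) && (code z < code x)].
  apply/subsetP => z; rewrite !inE => lz; rewrite lz andbT; by case: ltnP.
rewrite /pos; apply: (leq_trans (subset_leq_card sub)).
rewrite cardsU; apply: (leq_trans (leq_subr _ _)); rewrite leq_add2l.
apply: card_le_inj (fun z => code z - code y) _ _ _.
  move=> a b; rewrite !inE => /andP [a1 a2] /andP [b1 b2] E.
  apply: code_inj; lia.
move=> a; rewrite inE => /andP [a1 a2]; lia.
Qed.

Lemma pos_surj p : p < #|T| -> exists x, pos x = p.
Proof.
move=> pn.
have u : uniq (map pos (enum T)) by rewrite map_inj_uniq ?enum_uniq //; exact: pos_inj.
have sb : {subset map pos (enum T) <= iota 0 #|T|}.
  by move=> q /mapP [x _ ->]; rewrite mem_iota /= add0n pos_lt.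
have sz : size (iota 0 #|T|) <= size (map pos (enum T)).
  by rewrite size_map size_iota -cardT.
have [_ H] := uniq_min_size u sb sz.
have : p \in map pos (enum T) by rewrite H mem_iota.
by case/mapP => x _ ->; exists x.
Qed.

End Gen.

Lemma bandwidth_choosable (T : finType) (e : rel T) (k : nat) (code : T -> nat) :
  0 < k -> injective code -> (forall x y, e x y -> x != y) ->
  (forall x y, e x y -> code x < code y + k /\ code y < code x + k) ->
  equitably_k_choosable e k.
Proof.
move=> k0 cinj irr band L HL.
set n := #|T|.
pose P N (g : nat -> nat) := (forall y, pos code y < N -> g (pos code y) \in L y) /\
  (forall p q, q < p -> p < N -> p < q + k -> g p != g q).
have ex : forall N, N <= n -> exists g, P N g.
  elim => [|N IH] Nn.
    by exists (fun _ => 0); split => // p q _; rewrite ltn0.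
  have [g [g1 g2]] := IH (ltnW Nn).
  have [x px] := pos_surj cinj Nn.
  pose forb := [seq g q | q <- iota (N - k.-1) k.-1].
  have [c cL cnf] : exists2 c, c \in L x & c \notin forb.
    case: (boolP (all (fun c => c \in forb) (L x))) => [/allP H|/allPn [c cL cnf]].
      have [u s] := HL x.
      have := uniq_leq_size u H; rewrite size_map size_iota s; lia.
    by exists c.
  exists (fun p => if p == N then c else g p); split.
    move=> y; rewrite ltnS leq_eqVlt => /orP [/eqP E|lt].
      rewrite E eqxx; rewrite -px in E; by rewrite (pos_inj cinj E).
    by rewrite (ltn_eqF lt) g1.
  move=> p q qp; rewrite ltnS leq_eqVlt => /orP [/eqP E|lt] pk.
    rewrite E eqxx ifF; last by apply/eqP; lia.
    apply: contra cnf => /eqP ->; apply/mapP; exists q => //.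
    rewrite mem_iota; lia.
  rewrite (ltn_eqF lt) ifF; last by apply/eqP; lia.
  exact: g2.
have [g [g1 g2]] := ex n (leqnn n).
have close x y : code x < code y + k /\ code y < code x + k ->
    pos code x < pos code y -> g (pos code y) != g (pos code x).
  move=> bxy l; apply: g2 => //; first exact: pos_lt.
  have cl := pos_code cinj l.
  have := pos_span cinj cl; move: bxy; lia.
exists (fun x => g (pos code x)); split; [|split].
- move=> x y exy.
  case: (ltngtP (pos code x) (pos code y)) => [l|l|E].
  + by rewrite eq_sym; apply: close => //; exact: band.
  + by apply: close => //; have := band _ _ exy; lia.
  + by have := irr _ _ exy; rewrite (pos_inj cinj E) eqxx.
- move=> v; exact: g1 (pos_lt _ _).
- move=> c; apply: card_le_inj (fun v => pos code v %/ k) _ _ _.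
    move=> a b; rewrite !inE => /eqP ea /eqP eb E.
    apply: (pos_inj cinj); apply/eqP; apply/negPn/negP => ne.
    have key : forall a b, pos code a %/ k = pos code b %/ k -> pos code a < pos code b ->
                 pos code b < pos code a + k.
      move=> a' b' E' l'. have := divn_eq (pos code a') k. have := divn_eq (pos code b') k.
      have := ltn_pmod (pos code a') k0. have := ltn_pmod (pos code b') k0. rewrite E'. lia.
    case: (ltngtP (pos code a) (pos code b)) => [l|l|E2]; last by rewrite E2 eqxx in ne.
    + have := g2 _ _ l (pos_lt _ _) (key _ _ E l); by rewrite ea eb eqxx.
    + have := g2 _ _ l (pos_lt _ _) (key _ _ (esym E) l); by rewrite ea eb eqxx.
  move=> v _; rewrite /ceil_div.
  have pv := pos_lt code v.
  apply: (@leq_trans ((pos code v + k) %/ k)).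
    by rewrite divnDr ?dvdnn // divnn k0 addn1.
  apply: leq_div2r; rewrite -/n; lia.
Qed.

Section Spider.
Variables (m : nat) (l : 'I_m -> nat).

Definition hh := m.+1 %/ 2.
Definition UU := (\sum_(i < m) l i) * hh.
Definition cidx (i : 'I_m) : nat := if i < hh then (i : nat) else i - hh.
Definition aval (p : {i : 'I_m & 'I_(l i)}) := tagged p * hh + cidx (tag p) + 1.
Definition scode (x : spider_vertex l) : nat :=
  match x with
  | None => UU
  | Some p => if tag p < hh then UU + aval p else UU - aval p
  end.

Lemma hh_facts : 2 * hh <= m + 1 /\ m <= 2 * hh.
Proof. rewrite /hh; lia. Qed.

Lemma cidx_lt i : cidx i < hh.
Proof. have := hh_facts; have := ltn_ord i; rewrite /cidx; case: ifP; lia. Qed.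

Lemma aval_le p : aval p <= UU.
Proof.
case: p => i j /=; rewrite /aval /UU /=.
have li : l i <= \sum_(i0 < m) l i0 by rewrite (bigD1 i) //= leq_addr.
have c := cidx_lt i.
have : (nat_of_ord j).+1 * hh <= l i * hh by rewrite leq_mul2r ltn_ord orbT.
have : l i * hh <= (\sum_(i0 < m) l i0) * hh by rewrite leq_mul2r li orbT.
rewrite mulSn. set S := \sum_(i0 < m) l i0 in li *. set C := cidx i in c *. set H := hh in c *. move=> *. lia.
Qed.

Lemma divmod_uniq (j j' c c' : nat) : j * hh + c = j' * hh + c' -> c < hh -> c' < hh ->
  j = j' /\ c = c'.
Proof.
move=> E lc lc'.
have h0 : 0 < hh by lia.
split.
  have := congr1 (fun t => t %/ hh) E; rewrite /= !divnMDl // !divn_small // !addn0 //.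
have := congr1 (fun t => t %% hh) E; rewrite /= !modnMDl // !modn_small //.
Qed.

Lemma scode_inj : injective scode.
Proof.
move=> [p|] [q|] //=.
- case: p => i j; case: q => i' j' /=.
  have := aval_le (Tagged (fun i => (ordinal (l i))) j); have := aval_le (Tagged (fun i => (ordinal (l i))) j').
  rewrite /aval /=.
  have ci := cidx_lt i; have ci' := cidx_lt i'.
  have hi := ltn_ord i; have hi' := ltn_ord i'.
  move=> A1 A2 E.
  have [jj cc] : nat_of_ord j = j' /\ cidx i = cidx i'.
    apply: divmod_uniq => //.
    move: E; case: ifP => s1; case: ifP => s2; lia.
  have ii : i = i'.
    apply: val_inj => /=; move: cc E; rewrite /cidx.
    case: ifP => s1; case: ifP => s2; lia.
  subst i'; congr Some; congr Tagged; exact: val_inj.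
- have := aval_le p; case: p => i j /=; rewrite /aval /=; case: ifP; lia.
- have := aval_le q; case: q => i j /=; rewrite /aval /=; case: ifP; lia.
Qed.

Lemma adj_band x y : spider_adj x y -> scode x <= scode y + hh /\ scode y <= scode x + hh.
Proof.
case: x => [p|]; case: y => [q|] //=.
- case: p => i j; case: q => i' j' /= /andP [/eqP ii].
  subst i'.
  have := aval_le (Tagged (fun i => (ordinal (l i))) j); have := aval_le (Tagged (fun i => (ordinal (l i))) j').
  rewrite /aval /=.
  move=> A1 A2 /orP [/eqP E|/eqP E].
    move: A1 A2; rewrite -E mulSn; case: ifP; lia.
  move: A1 A2; rewrite -E mulSn; case: ifP; lia.
- have := aval_le p; have := cidx_lt (tag p).
  case: p => i j /= c; rewrite /aval /= => A /eqP ->; case: ifP; lia.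
- have := aval_le q; have := cidx_lt (tag q).
  case: q => i j /= c; rewrite /aval /= => A /eqP ->; case: ifP; lia.
Qed.

End Spider.

Theorem lemma2p3 (m : nat) (l : 'I_m -> nat)
  (hm : 3 <= m)
  (hpos : forall i, 0 < l i)
  (hsorted : forall i j : 'I_m, i <= j -> l i <= l j)
  (k : nat) (hk : m + 3 <= k) :
  equitably_k_choosable (graph_sq (@spider_adj m l)) k.
Proof.
apply: (@bandwidth_choosable _ _ k (@scode m l)).
- lia.
- exact: scode_inj.
- by move=> x y /andP [].
- move=> x y /andP [_ /orP [A|/existsP [z /andP [A B]]]].
    have := adj_band A; have := hh_facts m; lia.
  have := adj_band A; have := adj_band B; have := hh_facts m; lia.
Qed.
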